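(* Let $n\ge 1$, $k\ge 1$ be integers, $V$ a complex vector space of dimension $2n+2$, $I$ a complex vector space of dimension $k$, and $(W,J)$ a complex symplectic vector space of dimension $2n+2k$. For $A\in\mathrm{Hom}(V^*\otimes I^*,W)$ let $A^t\colon W\to V\otimes I$ be the composition of $W\to W^*$, $w\mapsto J(w,\cdot)$, with the dual map $A^*\colon W^*\to V\otimes I$, and let $$\Delta_A=(\mathrm{id}_V\otimes\pi)\circ(A^t\otimes\mathrm{id}_{S^nI})\colon W\otimes S^nI\to V\otimes S^{n+1}I,$$ where $\pi\colon I\otimes S^nI\to S^{n+1}I$ is the natural multiplication map. (Both spaces have dimension $(2n+2k)\binom{k+n-1}{n}=(2n+2)\binom{k+n}{n+1}$.) Let $D(A)=\det\Delta_A$ (computed in any fixed bases). If $A$ is degenerate, i.e. there exist $0\neq v\in V^*$ and $0\neq i\in I^*$ with $A(v\otimes i)=0$, then $D(A)=0$. *)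

(* Defs.v *)
(* Complex numbers are modelled as R[i] = complex R for an
   arbitrary R : realType (so C = R[i] is the field of complex numbers). *)
From HB Require Import structures.
From mathcomp Require Import all_boot all_order all_algebra.
From mathcomp Require Import reals complex.
Set Implicit Arguments. Unset Strict Implicit. Unset Printing Implicit Defensive.
Import Order.TTheory GRing.Theory Num.Theory.
Local Open Scope ring_scope.

(* Monomial basis of S^d I, I = C^k: multi-indices alpha : 'I_k -> nat with
   |alpha| = d (each entry is bounded by d). *)
Definition mon (k d : nat) :=
  {f : {ffun 'I_k -> 'I_d.+1} | \sum_(i < k) (f i : nat) == d}.

Definition Jform (F : comNzRingType) (w : nat) (J : 'M[F]_w) (x y : 'rV[F]_w) : F :=
  (x *m J *m trmx y) 0 0.

(* A : Hom(Vdual (x) Idual, W) in the dual bases: A a b = A(ea^dual (x) fb^dual).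
   A^t(w) = sum_(a,b) J(w, A a b) e_a (x) f_b, and
   Delta_A (e_c (x) x^alpha) = sum_(a,b) J(e_c, A a b) e_a (x) x^(alpha + e_b).
   DeltaA c alpha a beta = coefficient of e_a (x) x^beta in Delta_A(e_c (x) x^alpha). *)
Definition DeltaA (F : comNzRingType) (m k w n : nat) (J : 'M[F]_w)
  (A : 'I_m -> 'I_k -> 'rV[F]_w)
  (r : 'I_w * mon k n) (c : 'I_m * mon k n.+1) : F :=
  \sum_(b < k)
    (([forall j : 'I_k, (val c.2 j : nat) == (val r.2 j : nat) + (j == b)])%:R
     * Jform J (delta_mx 0 r.1) (A c.1 b)).

Definition degenerate (F : comNzRingType) (m k w : nat)
  (A : 'I_m -> 'I_k -> 'rV[F]_w) : Prop :=
  exists (v : 'rV[F]_m) (i : 'rV[F]_k), v != 0 /\ i != 0 /\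
    \sum_(a < m) \sum_(b < k) (v 0 a * i 0 b) *: A a b = 0.

(* Main.v *)
Require Import Defs.
From HB Require Import structures.
From mathcomp Require Import all_boot all_order all_algebra.
From mathcomp Require Import reals complex.
From mathcomp Require Import zify ring.
Import Order.TTheory GRing.Theory Num.Theory.
Local Open Scope ring_scope.

HB.instance Definition _ (k d : nat) := Finite.copy (mon k d)
  {f : {ffun 'I_k -> 'I_d.+1} | \sum_(i < k) (f i : nat) == d}.

Section Aux.
Set Implicit Arguments.
Variable F : fieldType.

Lemma JformE w (J : 'M[F]_w) x y :
  Jform J x y = \sum_(l < w) (x *m J) 0 l * y 0 l.
Proof. rewrite /Jform !mxE. by apply: eq_bigr => l _; rewrite [X in _ * X]mxE. Qed.

Lemma Jform_lin w (J : 'M[F]_w) m k x (c : 'I_m -> 'I_k -> F) A :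
  Jform J x (\sum_(a < m) \sum_(b < k) c a b *: A a b) =
  \sum_(a < m) \sum_(b < k) c a b * Jform J x (A a b).
Proof.
rewrite JformE.
under eq_bigr => l _ do rewrite summxE big_distrr /=.
rewrite exchange_big /=; apply: eq_bigr => a _.
under eq_bigr => l _ do rewrite summxE big_distrr /=.
rewrite exchange_big /=; apply: eq_bigr => b _.
rewrite JformE big_distrr /=; apply: eq_bigr => l _.
by rewrite [X in _ * X = _]mxE mulrCA.
Qed.

Variable k : nat.

Lemma add1_proof n (al : mon k n) (b : 'I_k) :
  \sum_(j < k) ((inord ((val al j : nat) + (j == b)) : 'I_n.+2) : nat) == n.+1.
Proof.
have H j : ((inord ((val al j : nat) + (j == b)) : 'I_n.+2) : nat)
   = ((val al j : nat) + (j == b))%N.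
  rewrite inordK //; have := ltn_ord (val al j); case: (j == b) => /=; lia.
under eq_bigr => j _ do rewrite H.
rewrite big_split /= (eqP (valP al)) (bigD1 b) //= eqxx big1; first by apply/eqP; lia.
by move=> j /negbTE ->.
Qed.

Definition add1_f n (al : mon k n) (b : 'I_k) : {ffun 'I_k -> 'I_n.+2} :=
  [ffun j => inord ((val al j : nat) + (j == b))].

Lemma add1_proof2 n (al : mon k n) (b : 'I_k) :
  \sum_(j < k) (add1_f al b j : nat) == n.+1.
Proof. by under eq_bigr => j _ do rewrite ffunE; exact: add1_proof. Qed.

Definition add1 n (al : mon k n) (b : 'I_k) : mon k n.+1 :=
  exist (fun f : {ffun 'I_k -> 'I_n.+2} => \sum_(i < k) (f i : nat) == n.+1)
    (add1_f al b) (add1_proof2 al b).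

Lemma add1E n (al : mon k n) b j : (val (add1 al b) j : nat) = ((val al j : nat) + (j == b))%N.
Proof.
rewrite /= ffunE inordK //; have := ltn_ord (val al j); case: (j == b) => /=; lia.
Qed.

Definition pure_f d (b : 'I_k) : {ffun 'I_k -> 'I_d.+1} :=
  [ffun j => if j == b then ord_max else ord0].

Lemma pure_proof d (b : 'I_k) : \sum_(j < k) (pure_f d b j : nat) == d.
Proof.
rewrite (bigD1 b) //= ffunE eqxx big1; first by rewrite -[X in _ == X](addn0 d).
by move=> j /negbTE; rewrite ffunE => ->.
Qed.

Definition pure d b : mon k d :=
  exist (fun f : {ffun 'I_k -> 'I_d.+1} => \sum_(i < k) (f i : nat) == d)
    (pure_f d b) (pure_proof d b).

Definition mono d (v : 'rV[F]_k) (be : mon k d) : F :=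
  \prod_(j < k) v 0 j ^+ (val be j : nat).

Lemma mono_add1 n v (al : mon k n) b : mono v (add1 al b) = mono v al * v 0 b.
Proof.
rewrite /mono; under eq_bigr => j _ do rewrite add1E exprD.
rewrite big_split /=; congr (_ * _).
rewrite (bigD1 b) //= eqxx expr1 big1 ?mulr1 //.
by move=> j /negbTE ->; rewrite expr0.
Qed.

Lemma mono_pure d v b : mono v (pure d b) = v 0 b ^+ d.
Proof.
rewrite /mono (bigD1 b) //= ffunE eqxx big1 ?mulr1 //.
by move=> j /negbTE; rewrite ffunE => ->; rewrite expr0.
Qed.

End Aux.
Arguments mono {F k d}.
Arguments add1 {k n}.
Arguments pure {k}.
Arguments add1E {k n}.
Arguments mono_add1 {F k n}.
Arguments mono_pure {F k d}.
Arguments Jform_lin {F w}.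

Lemma key (F : fieldType) m k w n (J : 'M[F]_w) (A : 'I_m -> 'I_k -> 'rV[F]_w)
  N (eR : 'I_N -> 'I_w * mon k n) (eC : 'I_N -> 'I_m * mon k n.+1)
  (heC : bijective eC) :
  degenerate A -> \det (\matrix_(p < N, q < N) DeltaA J A (eR p) (eC q)) = 0.
Proof.
case=> v [i [v0 [i0 hA]]].
set M := \matrix_(p, q) _.
pose y (c : 'I_m * mon k n.+1) := v 0 c.1 * mono i c.2.
pose Y := \col_(q < N) y (eC q).
have hMY : M *m Y = 0.
  apply/colP => p; rewrite !mxE.
  under eq_bigr => q _ do rewrite !mxE.
  set r := eR p.
  have -> : \sum_q DeltaA J A r (eC q) * y (eC q) = \sum_c DeltaA J A r c * y c.
    by rewrite (reindex eC) //; exact: onW_bij.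
  have -> : \sum_c DeltaA J A r c * y c =
     \sum_a \sum_be DeltaA J A r (a, be) * y (a, be).
    by rewrite pair_bigA; apply: eq_bigr => -[a be].
  have step a b : \sum_(be : mon k n.+1)
      ([forall j : 'I_k, (val be j : nat) == (val r.2 j : nat) + (j == b)])%:R
        * Jform J (delta_mx 0 r.1) (A a b) * (v 0 a * mono i be)
      = mono i r.2 * ((v 0 a * i 0 b) * Jform J (delta_mx 0 r.1) (A a b)).
    rewrite (bigD1 (add1 r.2 b)) //= big1 ?addr0.
      have -> : [forall j, (val (add1 r.2 b) j : nat) == (val r.2 j : nat) + (j == b)].
        by apply/forallP => j; rewrite add1E.
      by rewrite mul1r mono_add1; ring.
    move=> be Hne; case: forallP => [H|_]; last by rewrite !mul0r.
    case/eqP: Hne; apply: val_inj; apply/ffunP => j; apply: ord_inj.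
    rewrite add1E; exact/eqP/H.
  under eq_bigr => a _ do (under eq_bigr => be _ do rewrite /DeltaA /= big_distrl /=; rewrite exchange_big /=).
  under eq_bigr => a _ do under eq_bigr => b _ do rewrite step.
  under eq_bigr => a _ do rewrite -big_distrr /=.
  rewrite -big_distrr /= -Jform_lin hA JformE big1 ?mulr0 // => l _.
  by rewrite [X in _ * X]mxE mulr0.
have [a0 Ha0] : exists a, v 0 a != 0.
  apply/existsP; apply: contraR v0 => /existsPn H; apply/eqP/rowP => a.
  by rewrite !mxE; apply/eqP/negbNE/H.
have [b0 Hb0] : exists b, i 0 b != 0.
  apply/existsP; apply: contraR i0 => /existsPn H; apply/eqP/rowP => a.
  by rewrite !mxE; apply/eqP/negbNE/H.
case: heC => g gK Kg.
have HY : Y (g (a0, pure n.+1 b0)) 0 != 0.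
  by rewrite mxE Kg /y /= mono_pure mulf_neq0 // expf_neq0.
apply/eqP; apply: contraTT HY => hdet.
have uM : M \in unitmx by rewrite unitmxE unitfE.
have -> : Y = invmx M *m (M *m Y) by rewrite mulKmx.
by rewrite hMY mulmx0 mxE eqxx.
Qed.

Theorem mainTheorem2 (R : realType) (n k : nat) (hn : (1 <= n)%N) (hk : (1 <= k)%N)
  (J : 'M[R[i]]_(2 * n + 2 * k))
  (hJskew : trmx J = - J) (hJnd : J \in unitmx)
  (A : 'I_(2 * n + 2) -> 'I_k -> 'rV[R[i]]_(2 * n + 2 * k))
  (N : nat) (eR : 'I_N -> 'I_(2 * n + 2 * k) * mon k n)
  (eC : 'I_N -> 'I_(2 * n + 2) * mon k n.+1)
  (heR : bijective eR) (heC : bijective eC) :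
  degenerate A ->
  \det (\matrix_(p < N, q < N) DeltaA J A (eR p) (eC q)) = 0.
Proof. exact: key. Qed.
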